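(* Let $\mathcal V$ be a finite alphabet, $\mathcal V^*$ the set of finite strings over $\mathcal V$, $e$ an environment, $p$ a probability distribution on test suites $t\in\mathcal V^*$, and $c_1,c_2\in\mathcal V^*$ fixed implementations. Let $$\mathrm{sim}_{p,e}(c_1,c_2):=\mathbb E_{t\sim p}\Big[\tfrac{1}{|t|}\sum_{k=1}^{|t|}\mathbf 1\{O_k(c_1,t\mid e)=O_k(c_2,t\mid e)\}\Big]$$ and suppose $\mathrm{sim}_{p,e}(c_1,c_2)=\mu\in(0,1)$. For $m\ge1$, draw $t_1,\dots,t_m\sim p$ i.i.d. and define the smooth estimator $$\widehat{\mathrm{sim}}_{p,e;m}(c_1,c_2):=\frac1m\sum_{j=1}^m\frac{1}{|t_j|}\sum_{k=1}^{|t_j|}\mathbf 1\{O_k(c_1,t_j\mid e)=O_k(c_2,t_j\mid e)\}$$ and the sharp estimator $\widehat{\mathrm{sim}}^\infty_{p,e;m}(c_1,c_2):=\lim_{s\to\infty}\big(\widehat{\mathrm{sim}}_{p,e;m}(c_1,c_2)\big)^s=\mathbf 1\{\widehat{\mathrm{sim}}_{p,e;m}(c_1,c_2)=1\}$. For an estimator $\widehat X$ let $\mathrm{SNR}(\widehat X):=(\mathbb E[\widehat X])^2/\mathrm{Var}(\widehat X)$. Then for every $m\ge1$, $$\frac{\mathrm{SNR}(\widehat{\mathrm{sim}}_{p,e;m})}{\mathrm{SNR}(\widehat{\mathrm{sim}}^\infty_{p,e;m})}\ \ge\ m\Big(\frac1\mu\Big)^{m-1}\cdot\frac{1-\mu^m}{1-\mu}\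 \ge\ m^2.$$
   Context: A test suite $t\in\mathcal V^*$ consists of $|t|\ge1$ test cases. For an environment $e$, an implementation $c$ and a test suite $t$, the test harness returns a deterministic output vector $O(c,t\mid e)=(O_1(c,t\mid e),\dots,O_{|t|}(c,t\mid e))\in\mathbb O^{|t|}$ for a set $\mathbb O$ of possible test outputs. *)

(* Defs.v *)
From HB Require Import structures.
From mathcomp Require Import all_boot all_order all_algebra.
From mathcomp Require Import mathcomp_extra boolp classical_sets reals ereal esum.
Set Implicit Arguments. Unset Strict Implicit. Unset Printing Implicit Defensive.
Import Order.TTheory GRing.Theory Num.Theory.
Local Open Scope classical_set_scope.
Local Open Scope ring_scope.

Section Defs.
Variables (R : realType) (V : finType) (Obs : eqType) (Env : Type).
(* Test harness: O e c t k is the k-th output (0-based, k < size t) of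
   implementation c on test suite t in environment e. *)
Variable O : Env -> seq V -> seq V -> nat -> Obs.
Variables (e : Env) (c1 c2 : seq V).

Definition agree_frac (t : seq V) : R :=
  (size t)%:R^-1 * \sum_(k < size t) (O e c1 t k == O e c2 t k)%:R.

Definition is_pmf (p : seq V -> R) : Prop :=
  (forall t, 0 <= p t) /\ (\esum_(t in [set: seq V]) (p t)%:E = 1%E).

Definition sim (p : seq V -> R) : R :=
  fine (\esum_(t in [set: seq V]) (p t * agree_frac t)%:E).

Definition Eiid (p : seq V -> R) (m : nat) (F : m.-tuple (seq V) -> R) : R :=
  fine (\esum_(ts in [set: m.-tuple (seq V)])
          ((\prod_(j < m) p (tnth ts j)) * F ts)%:E).

Definition Variid (p : seq V -> R) (m : nat) (F : m.-tuple (seq V) -> R) : R :=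
  Eiid p (fun ts => (F ts - Eiid p F) ^+ 2).

Definition SNR (p : seq V -> R) (m : nat) (F : m.-tuple (seq V) -> R) : R :=
  (Eiid p F) ^+ 2 / Variid p F.

Definition smooth_est (m : nat) (ts : m.-tuple (seq V)) : R :=
  m%:R^-1 * \sum_(j < m) agree_frac (tnth ts j).

(* sharp estimator: lim_{s->oo} (smooth)^s = 1{smooth = 1} *)
Definition sharp_est (m : nat) (ts : m.-tuple (seq V)) : R :=
  if smooth_est ts == 1 then 1 else 0.

End Defs.

(* Main.v *)
Require Import Defs.
From HB Require Import structures.
From mathcomp Require Import all_boot all_order all_algebra.
From mathcomp Require Import mathcomp_extra boolp classical_sets reals ereal esum fsbigop.
From mathcomp Require Import ring lra.
Import Order.TTheory GRing.Theory Num.Theory.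
Local Open Scope classical_set_scope.
Local Open Scope ring_scope.

Section Aux.
Variables (R : realType) (T : choiceType).

Lemma esumZ_le (c : R) (a : T -> \bar R) : 0 <= c -> (forall i, (0 <= a i)%E) ->
  (\esum_(i in [set: T]) (c%:E * a i) <= c%:E * \esum_(i in [set: T]) a i)%E.
Proof.
move=> c0 a0; apply: ge_ereal_sup => _ [X [finX _] <-].
rewrite -ge0_mule_fsumr //; apply: lee_wpmul2l; first by rewrite lee_fin.
by apply: ereal_sup_ubound; exists X.
Qed.

Lemma esumZ (c : R) (a : T -> \bar R) : 0 <= c -> (forall i, (0 <= a i)%E) ->
  \esum_(i in [set: T]) (c%:E * a i)%E = (c%:E * \esum_(i in [set: T]) a i)%E.
Proof.
move=> c0 a0; have [->|cn0] := eqVneq c 0.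
  by rewrite mul0e esum1 // => i _; rewrite mul0e.
have cp : 0 < c by rewrite lt_def cn0.
apply/eqP; rewrite eq_le esumZ_le //=.
have h := @esumZ_le c^-1 (fun i => c%:E * a i)%E.
rewrite (eq_esum (b := a)) in h; last first.
  by move=> i _; rewrite muleA -EFinM mulVf // mul1e.
have ci : 0 <= c^-1 by rewrite invr_ge0 ltW.
have := h ci (fun i => mule_ge0 (ltW cp : (0 <= c%:E)%E) (a0 i)).
move=> /(lee_wpmul2l (ltW cp : (0 <= c%:E)%E)).
by rewrite muleA -EFinM mulfV // mul1e.
Qed.

End Aux.
Section Aux2.
Variables (R : realType) (T : choiceType).
Lemma esum_tuple_prod (m : nat) (f : 'I_m -> T -> R) :
  (forall j t, 0 <= f j t) ->
  (forall j, \esum_(t in [set: T]) (f j t)%:E \is a fin_num) ->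
  \esum_(ts in [set: m.-tuple T]) (\prod_(j < m) f j (tnth ts j))%:E =
  (\prod_(j < m) \esum_(t in [set: T]) (f j t)%:E)%E.
Proof.
elim: m f => [|m IH] f f0 ffin.
  rewrite big_ord0.
  have -> : [set: 0.-tuple T] = [set [tuple]].
    by apply/seteqP; split => // t _; rewrite /= [t]tuple0.
  by rewrite esum_set1 ?big_ord0 // lee_fin.
pose e := fun k : T * m.-tuple T => [tuple of k.1 :: k.2].
rewrite (reindex_esum ([set: T] `*`` (fun _ => [set: m.-tuple T])) _ e); last first.
  split.
  - by [].
  - by move=> [x t] [y u] _ _ /(congr1 val) /= [-> /val_inj ->].
  - move=> t _; exists (thead t, behead_tuple t) => //.
    by rewrite /e /= [RHS]tuple_eta.
rewrite (eq_esum (b := fun k : T * m.-tuple T => (f ord0 k.1 * \prod_(j < m) f (lift ord0 j) (tnth k.2 j))%:E)); last first.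
  move=> [x t] _; rewrite big_ord_recl /e /= tnth0; congr (_ * _)%:E.
  by apply: eq_bigr => j _; rewrite tnthS.
rewrite -(esum_esum (a := fun x (ts : m.-tuple T) => (f ord0 x * \prod_(j < m) f (lift ord0 j) (tnth ts j))%:E)); last first.
  by move=> *; rewrite lee_fin mulr_ge0 // prodr_ge0.
have IHm := IH (fun j => f (lift ord0 j)) (fun j => f0 _) (fun j => ffin _).
set P := (\prod_(j < m) _)%E in IHm.
have Pfin : P \is a fin_num by apply: prode_fin_num.
have P0 : (0 <= P)%E by apply: prode_ge0 => j _; apply: esum_ge0 => t _; rewrite lee_fin.
rewrite big_ord_recl.
transitivity (\esum_(x in [set: T]) ((fine P)%:E * (f ord0 x)%:E))%E.
  apply: eq_esum => x _.
  rewrite (eq_esum (b := fun ts : m.-tuple T => ((f ord0 x)%:E * (\prod_(j < m) f (lift ord0 j) (tnth ts j))%:E)%E)); last first.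
    by move=> t _; rewrite EFinM.
  rewrite (@esumZ R (m.-tuple T)); last 2 first.
  - exact: f0.
  - by move=> t; rewrite lee_fin prodr_ge0.
  by rewrite IHm fineK // muleC.
rewrite esumZ; last 2 first.
- exact: fine_ge0.
- by move=> x; rewrite lee_fin.
by rewrite fineK // muleC.
Qed.
End Aux2.

Section Main.
Variables (R : realType) (V : finType) (Obs : eqType) (Env : Type).
Variables (O : Env -> seq V -> seq V -> nat -> Obs) (e : Env) (c1 c2 : seq V).
Variable (p : seq V -> R).

Local Notation T := (seq V).
Local Notation X := (agree_frac R O e c1 c2).
Definition Ep (g : T -> R) : R := fine (\esum_(t in [set: T]) (p t * g t)%:E).
Definition Ee {m} (F : m.-tuple T -> R) : \bar R :=
  \esum_(ts in [set: m.-tuple T]) ((\prod_(j < m) p (tnth ts j)) * F ts)%:E.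

Lemma X01 t : 0 <= X t <= 1.
Proof.
rewrite /agree_frac; have [->|sz] := eqVneq (size t) 0%N.
  by rewrite big_ord0 mulr0 lexx ler01.
rewrite mulr_ge0 ?invr_ge0 ?ler0n ?sumr_ge0 //=.
have szp : (0 < (size t)%:R :> R) by rewrite ltr0n lt0n.
rewrite ler_pdivrMl // mulr1.
apply: le_trans (_ : \sum_(k < size t) (1 : R) <= _).
  by apply: ler_sum => k _; rewrite lern1 leq_b1.
by rewrite sumr_const card_ord.
Qed.

Lemma Ep_esum (Hp : is_pmf p) (g : T -> R) B : 0 <= B -> (forall t, 0 <= g t <= B) ->
  \esum_(t in [set: T]) (p t * g t)%:E = (Ep g)%:E /\ 0 <= Ep g <= B.
Proof.
case: Hp => p0 p1 B0 g01.
have ge0 : (0 <= \esum_(t in [set: T]) (p t * g t)%:E)%E.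
  by apply: esum_ge0 => t _; rewrite lee_fin mulr_ge0 //; case/andP: (g01 t).
have leB : (\esum_(t in [set: T]) (p t * g t)%:E <= B%:E)%E.
  apply: le_trans (_ : \esum_(t in [set: T]) (B%:E * (p t)%:E)%E <= _)%E.
    apply: le_esum => t _; rewrite -EFinM lee_fin mulrC ler_wpM2r //.
    by case/andP: (g01 t).
  by rewrite esumZ // ?p1 ?mule1 // => t; rewrite lee_fin.
have fin : \esum_(t in [set: T]) (p t * g t)%:E \is a fin_num.
  by rewrite ge0_fin_numE // (le_lt_trans leB) ?ltry.
split; first by rewrite /Ep fineK.
by rewrite -lee_fin -[X in (X <= _)%E]/(0%:E) -lee_fin /Ep fineK // ge0 leB.
Qed.


Lemma Eiid_prod (Hp : is_pmf p) m (g : 'I_m -> T -> R) :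
  (forall j t, 0 <= g j t <= 1) ->
  Eiid p (fun ts : m.-tuple T => \prod_(j < m) g j (tnth ts j)) = \prod_(j < m) Ep (g j).
Proof.
move=> g01; rewrite /Eiid.
rewrite (eq_esum (b := fun ts : m.-tuple T => (\prod_(j < m) (p (tnth ts j) * g j (tnth ts j)))%:E)); last first.
  by move=> ts _; rewrite big_split.
have p0 := Hp.1.
rewrite (@esum_tuple_prod _ _ _ (fun j t => p t * g j t)); last 2 first.
- by move=> j t; rewrite mulr_ge0 //; case/andP: (g01 j t).
- by move=> j; rewrite (@Ep_esum Hp _ 1 ler01 (g01 j)).1.
rewrite (eq_bigr (fun j => (Ep (g j))%:E)); last by move=> j _; rewrite (@Ep_esum Hp _ 1 ler01 (g01 j)).1.
by rewrite prodEFin.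
Qed.

Lemma Ee1 (Hp : is_pmf p) m : Ee (fun _ : m.-tuple T => 1) = 1%E.
Proof.
rewrite /Ee (eq_esum (b := fun ts : m.-tuple T => (\prod_(j < m) p (tnth ts j))%:E)); last first.
  by move=> ts _; rewrite [in LHS]mulr1.
have p0 := Hp.1.
have h1 : \esum_(t in [set: T]) (p t)%:E \is a fin_num by rewrite Hp.2.
have := @esum_tuple_prod R _ m (fun _ t => p t) (fun _ t => p0 t) (fun _ => h1).
move=> ->; rewrite big1 // => j _.
by rewrite Hp.2.
Qed.

Lemma Ee_fin (Hp : is_pmf p) m (F : m.-tuple T -> R) B : 0 <= B ->
  (forall ts, 0 <= F ts <= B) -> Ee F = (Eiid p F)%:E /\ 0 <= Eiid p F <= B.
Proof.
move=> B0 F01; have p0 := Hp.1.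
have P0 ts : 0 <= \prod_(j < m) p (tnth ts j) by apply: prodr_ge0.
have ge0 : (0 <= Ee F)%E.
  by apply: esum_ge0 => t _; rewrite lee_fin mulr_ge0 //; case/andP: (F01 t).
have leB : (Ee F <= B%:E)%E.
  apply: le_trans (_ : \esum_(t in [set: m.-tuple T]) (B%:E * ((\prod_(j < m) p (tnth t j)) * 1)%:E)%E <= _)%E.
    apply: le_esum => t _; rewrite -EFinM lee_fin mulr1 mulrC ler_wpM2r //.
    by case/andP: (F01 t).
  rewrite esumZ // ?mule1 //; last by move=> t; rewrite lee_fin mulr1.
  by have := Ee1 Hp m; rewrite /Ee => ->; rewrite mule1.
have fin : Ee F \is a fin_num.
  by rewrite ge0_fin_numE // (le_lt_trans leB) ?ltry.
split; first by rewrite /Eiid -/(Ee F) fineK.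
by rewrite -lee_fin -[X in (X <= _)%E]/(0%:E) -lee_fin /Eiid -/(Ee F) fineK // ge0 leB.
Qed.


Lemma EiidD_sum (Hp : is_pmf p) m n (F : 'I_n -> m.-tuple T -> R) B : 0 <= B ->
  (forall i ts, 0 <= F i ts <= B) ->
  Eiid p (fun ts => \sum_(i < n) F i ts) = \sum_(i < n) Eiid p (F i).
Proof.
move=> B0 FB; have p0 := Hp.1.
have P0 (ts : m.-tuple T) : 0 <= \prod_(j < m) p (tnth ts j) by apply: prodr_ge0.
apply: EFin_inj.
have nB : 0 <= n%:R * B by rewrite mulr_ge0.
have SB : forall ts, 0 <= \sum_(i < n) F i ts <= n%:R * B.
  move=> ts; rewrite sumr_ge0 /=; last by move=> i _; case/andP: (FB i ts).
  apply: le_trans (_ : \sum_(i < n) B <= _); first by apply: ler_sum => i _; case/andP: (FB i ts).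
  by rewrite sumr_const card_ord mulr_natl.
rewrite -(@Ee_fin Hp m _ (n%:R * B) nB SB).1.
rewrite /Ee (eq_esum (b := fun ts : m.-tuple T => \sum_(i < n) ((\prod_(j < m) p (tnth ts j)) * F i ts)%:E)); last first.
  by move=> ts _; rewrite mulr_sumr -sumEFin.
rewrite esum_sum; last by move=> ts i _ _; rewrite lee_fin mulr_ge0 //; case/andP: (FB i ts).
rewrite -sumEFin; apply: eq_bigr => i _.
by rewrite -(@Ee_fin Hp m _ B B0 (FB i)).1.
Qed.

Lemma EiidZ (Hp : is_pmf p) m (F : m.-tuple T -> R) c B : 0 <= c -> 0 <= B ->
  (forall ts, 0 <= F ts <= B) ->
  Eiid p (fun ts => c * F ts) = c * Eiid p F.
Proof.
move=> c0 B0 FB; have p0 := Hp.1.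
have P0 (ts : m.-tuple T) : 0 <= \prod_(j < m) p (tnth ts j) by apply: prodr_ge0.
apply: EFin_inj.
have cB : 0 <= c * B by rewrite mulr_ge0.
have SB : forall ts, 0 <= c * F ts <= c * B.
  by move=> ts; case/andP: (FB ts) => h1 h2; rewrite mulr_ge0 //= ler_wpM2l.
rewrite -(@Ee_fin Hp m _ (c * B) cB SB).1.
rewrite EFinM -(@Ee_fin Hp m _ B B0 FB).1 /Ee -esumZ //; last first.
  by move=> ts; rewrite lee_fin mulr_ge0 //; case/andP: (FB ts).
apply: eq_esum => ts _; rewrite -EFinM; congr (_%:E).
by rewrite mulrCA.
Qed.

Lemma EiidD (Hp : is_pmf p) m (F G : m.-tuple T -> R) B : 0 <= B ->
  (forall ts, 0 <= F ts <= B) -> (forall ts, 0 <= G ts <= B) ->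
  Eiid p (fun ts => F ts + G ts) = Eiid p F + Eiid p G.
Proof.
move=> B0 FB GB; have p0 := Hp.1.
have P0 (ts : m.-tuple T) : 0 <= \prod_(j < m) p (tnth ts j) by apply: prodr_ge0.
apply: EFin_inj.
have BB : 0 <= B + B by rewrite addr_ge0.
have SB : forall ts, 0 <= F ts + G ts <= B + B.
  move=> ts; case/andP: (FB ts) => h1 h2; case/andP: (GB ts) => h3 h4.
  by rewrite addr_ge0 //= lerD.
rewrite -(@Ee_fin Hp m _ (B + B) BB SB).1.
rewrite EFinD -(@Ee_fin Hp m _ B B0 FB).1 -(@Ee_fin Hp m _ B B0 GB).1 /Ee -esumD; last first.
- by move=> ts _; rewrite lee_fin mulr_ge0 //; case/andP: (GB ts).
- by move=> ts _; rewrite lee_fin mulr_ge0 //; case/andP: (FB ts).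
by apply: eq_esum => ts _; rewrite -EFinD mulrDr.
Qed.

Lemma Eiid1 (Hp : is_pmf p) m : Eiid p (fun _ : m.-tuple T => 1) = 1.
Proof.
have h : forall ts : m.-tuple T, 0 <= (fun _ => 1 : R) ts <= 1 by move=> ts /=; rewrite lexx ler01.
by apply: EFin_inj; rewrite -(@Ee_fin Hp m _ 1 ler01 h).1 Ee1.
Qed.

Lemma Var_formula (Hp : is_pmf p) m (F : m.-tuple T -> R) :
  (forall ts, 0 <= F ts <= 1) ->
  Variid p F = Eiid p (fun ts => F ts ^+ 2) - (Eiid p F) ^+ 2.
Proof.
move=> F01; have [_ /andP[a0 a1]] := (@Ee_fin Hp m _ 1 ler01 F01).
set a := Eiid p F in a0 a1 *.
have h1 : forall ts, 0 <= (F ts - a) ^+ 2 <= 2.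
  move=> ts; case/andP: (F01 ts) => f0 f1; rewrite sqr_ge0 /=.
  nra.
have h2 : forall ts, 0 <= (2 * a) * F ts <= 2.
  move=> ts; case/andP: (F01 ts) => f0 f1; rewrite !mulr_ge0 //=; nra.
have h3 : forall ts, 0 <= F ts ^+ 2 <= 1.
  move=> ts; case/andP: (F01 ts) => f0 f1; rewrite sqr_ge0 /=; nra.
have h4 : forall ts : m.-tuple T, 0 <= a ^+ 2 * 1 <= 1.
  move=> ts; rewrite mulr1 sqr_ge0 /=; nra.
have h5 : forall ts : m.-tuple T, 0 <= (fun _ => 1 : R) ts <= 1 by move=> ts /=; rewrite lexx ler01.
have E : Eiid p (fun ts => (F ts - a) ^+ 2 + (2 * a) * F ts) =
         Eiid p (fun ts => F ts ^+ 2 + a ^+ 2 * 1).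
  by congr Eiid; apply/funext => ts; rewrite mulr1; ring.
have l2 : (0 : R) <= 2 by [].
rewrite (@EiidD Hp m (fun ts => (F ts - a) ^+ 2) (fun ts => 2 * a * F ts) 2 l2 h1 h2) in E.
rewrite (@EiidD Hp m (fun ts => F ts ^+ 2) (fun ts => a ^+ 2 * 1) 1 ler01 h3 h4) in E.
have a2 : 0 <= 2 * a by rewrite mulr_ge0.
rewrite (@EiidZ Hp m F (2 * a) 1 a2 ler01 F01) in E.
rewrite (@EiidZ Hp m (fun _ => 1) (a ^+ 2) 1 (sqr_ge0 a) ler01 h5) (Eiid1 Hp) in E.
have -> : Variid p F = Eiid p (fun ts => (F ts - a) ^+ 2) by [].
rewrite -/a in E.
apply: (addIr (2 * a * a)); rewrite E; ring.
Qed.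


Lemma Ep1 (Hp : is_pmf p) : Ep (fun _ => 1) = 1.
Proof. by rewrite /Ep; under eq_esum do rewrite mulr1; rewrite Hp.2. Qed.

Lemma Eiid_single (Hp : is_pmf p) m (i : 'I_m) (f : T -> R) :
  (forall t, 0 <= f t <= 1) ->
  Eiid p (fun ts : m.-tuple T => f (tnth ts i)) = Ep f.
Proof.
move=> f01.
pose g := fun j : 'I_m => if j == i then f else (fun _ => 1 : R).
have g01 : forall j t, 0 <= g j t <= 1.
  by move=> j t; rewrite /g; case: eqP => _ //; rewrite lexx ler01.
have R1 : \prod_(j < m) Ep (g j) = Ep f.
  rewrite (bigD1 i) //= big1 ?mulr1; first by rewrite /g eqxx.
  by move=> j /negPf hj; rewrite /g hj Ep1.
have L1 : (fun ts : m.-tuple T => \prod_(j < m) g j (tnth ts j)) = (fun ts => f (tnth ts i)).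
  apply/funext => ts.
  rewrite (bigD1 i) //= big1 ?mulr1; first by rewrite /g eqxx.
  by move=> j /negPf hj; rewrite /g hj.
by rewrite -L1 -R1 Eiid_prod.
Qed.

Lemma Eiid_pair (Hp : is_pmf p) m (i k : 'I_m) (f h : T -> R) : i != k ->
  (forall t, 0 <= f t <= 1) -> (forall t, 0 <= h t <= 1) ->
  Eiid p (fun ts : m.-tuple T => f (tnth ts i) * h (tnth ts k)) = Ep f * Ep h.
Proof.
move=> ik f01 h01.
pose g := fun j : 'I_m => if j == i then f else if j == k then h else (fun _ => 1 : R).
have g01 : forall j t, 0 <= g j t <= 1.
  by move=> j t; rewrite /g; case: eqP => _ //; case: eqP => _ //; rewrite lexx ler01.
have ki : (k != i) by rewrite eq_sym.
have R1 : \prod_(j < m) Ep (g j) = Ep f * Ep h.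
  rewrite (bigD1 i) //= (bigD1 k) //= big1 ?mulr1; first by rewrite /g eqxx (negPf ki) eqxx.
  by move=> j /andP[/negPf hi /negPf hk]; rewrite /g hi hk Ep1.
have L1 : (fun ts : m.-tuple T => \prod_(j < m) g j (tnth ts j)) = (fun ts => f (tnth ts i) * h (tnth ts k)).
  apply/funext => ts.
  rewrite (bigD1 i) //= (bigD1 k) //= big1 ?mulr1; first by rewrite /g eqxx (negPf ki) eqxx.
  by move=> j /andP[/negPf hi /negPf hk]; rewrite /g hi hk.
by rewrite -L1 -R1 Eiid_prod.
Qed.


Lemma Ep_Z (Hp : is_pmf p) (g : T -> R) c : 0 <= c -> (forall t, 0 <= g t <= 1) ->
  Ep (fun t => c * g t) = c * Ep g.
Proof.
move=> c0 g01; have p0 := Hp.1.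
have [E1 _] := @Ep_esum Hp g 1 ler01 g01.
rewrite /Ep (eq_esum (b := fun t => (c%:E * (p t * g t)%:E)%E)); last first.
  by move=> t _; rewrite -EFinM mulrCA.
rewrite esumZ // ?E1 //; last by move=> t; rewrite lee_fin mulr_ge0 //; case/andP: (g01 t).
Qed.

Lemma Ep_le (Hp : is_pmf p) (g h : T -> R) : (forall t, 0 <= g t <= 1) -> (forall t, 0 <= h t <= 1) ->
  (forall t, g t <= h t) -> Ep g <= Ep h.
Proof.
move=> g01 h01 gh; have p0 := Hp.1.
have [E1 _] := @Ep_esum Hp g 1 ler01 g01.
have [E2 _] := @Ep_esum Hp h 1 ler01 h01.
rewrite -lee_fin -E1 -E2; apply: le_esum => t _; rewrite lee_fin ler_wpM2l //.
Qed.

Section Smooth.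
Variables (m : nat).
Local Notation S := (@smooth_est R V Obs Env O e c1 c2 m).

Lemma smooth_sum (m0 : (0 < m)%N) ts : S ts = \sum_(j < m) (m%:R^-1 * X (tnth ts j)).
Proof. by rewrite /smooth_est mulr_sumr. Qed.

Lemma Y01 t : 0 <= m%:R^-1 * X t <= 1.
Proof.
case/andP: (X01 t) => h1 h2.
rewrite mulr_ge0 ?invr_ge0 ?ler0n //=.
case: m => [|n]; first by rewrite invr0 mul0r.
rewrite -[leRHS]mul1r ler_pM // ?invr_ge0 ?ler0n // invf_le1 ?ler1n // ltr0n.
Qed.

Lemma S01 (m0 : (0 < m)%N) ts : 0 <= S ts <= 1.
Proof.
rewrite /smooth_est; have mp : 0 < m%:R :> R by rewrite ltr0n.
rewrite mulr_ge0 ?invr_ge0 ?ler0n ?sumr_ge0 //=; last by move=> j _; case/andP: (X01 (tnth ts j)).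
rewrite ler_pdivrMl // mulr1.
apply: le_trans (_ : \sum_(j < m) (1 : R) <= _).
  by apply: ler_sum => j _; case/andP: (X01 (tnth ts j)).
by rewrite sumr_const card_ord.
Qed.

Lemma ES (Hp : is_pmf p) (m0 : (0 < m)%N) : Eiid p S = Ep X.
Proof.
have mn0 : m%:R != 0 :> R by rewrite pnatr_eq0 -lt0n.
rewrite (_ : S = fun ts => \sum_(j < m) (m%:R^-1 * X (tnth ts j))); last first.
  by apply/funext => ts; rewrite smooth_sum.
rewrite (@EiidD_sum Hp m m (fun j ts => m%:R^-1 * X (tnth ts j)) 1 ler01); last by move=> j ts; apply: Y01.
rewrite (eq_bigr (fun _ => m%:R^-1 * Ep X)); last first.
  move=> j _; rewrite (@Eiid_single Hp m j (fun t => m%:R^-1 * X t) Y01).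
  by rewrite Ep_Z // ?invr_ge0 ?ler0n //; apply: X01.
by rewrite sumr_const card_ord -mulrnAl -mulr_natr mulVf // mul1r.
Qed.


Lemma VarS (Hp : is_pmf p) (m0 : (0 < m)%N) :
  Variid p S * m%:R = Ep (fun t => X t * X t) - (Ep X) ^+ 2.
Proof.
have mn0 : m%:R != 0 :> R by rewrite pnatr_eq0 -lt0n.
have mi0 : 0 <= m%:R^-1 :> R by rewrite invr_ge0 ler0n.
pose Y t := m%:R^-1 * X t.
have YY01 t : 0 <= Y t * Y t <= 1.
  by case/andP: (Y01 t) => h1 h2; rewrite mulr_ge0 //= mulr_ile1.
have XX01 t : 0 <= X t * X t <= 1.
  by case/andP: (X01 t) => h1 h2; rewrite mulr_ge0 //= mulr_ile1.
rewrite (@Var_formula Hp m _ (S01 m0)) (ES Hp m0).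
rewrite (_ : (fun ts => S ts ^+ 2) = fun ts => \sum_(i < m) \sum_(j < m) (Y (tnth ts i) * Y (tnth ts j))); last first.
  apply/funext => ts; rewrite smooth_sum // expr2 mulr_suml; apply: eq_bigr => i _.
  by rewrite mulr_sumr.
have inB i ts : 0 <= \sum_(j < m) (Y (tnth ts i) * Y (tnth ts j)) <= m%:R.
  rewrite sumr_ge0 /=; last first.
    by move=> j _; case/andP: (Y01 (tnth ts i)); case/andP: (Y01 (tnth ts j)) => *; rewrite mulr_ge0.
  apply: le_trans (_ : \sum_(j < m) (1 : R) <= _); last by rewrite sumr_const card_ord.
  by apply: ler_sum => j _; case/andP: (Y01 (tnth ts i)); case/andP: (Y01 (tnth ts j)) => *; rewrite mulr_ile1.
rewrite (@EiidD_sum Hp m m _ m%:R (ler0n _ _) inB).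
set A := Ep (fun t => Y t * Y t).
set B := Ep Y.
have inner i : Eiid p (fun ts : m.-tuple T => \sum_(j < m) (Y (tnth ts i) * Y (tnth ts j))) = B * B *+ m + (A - B * B).
  rewrite (@EiidD_sum Hp m m _ 1 ler01); last first.
    by move=> j ts; case/andP: (Y01 (tnth ts i)); case/andP: (Y01 (tnth ts j)) => *; rewrite mulr_ge0 //= mulr_ile1.
  rewrite (eq_bigr (fun j => B * B + (if i == j then A - B * B else 0))); last first.
    move=> j _; case: eqP => [<-|/eqP ij].
      by rewrite (@Eiid_single Hp m i (fun t => Y t * Y t) YY01) addrC subrK.
    by rewrite (@Eiid_pair Hp m i j Y Y ij Y01 Y01) addr0.
  rewrite big_split /= sumr_const card_ord; congr (_ + _).
  by rewrite (bigD1 i) //= eqxx big1 ?addr0 // => j; rewrite eq_sym => /negPf ->.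
rewrite (eq_bigr _ (fun i _ => inner i)) sumr_const card_ord.
have -> : A = m%:R^-1 * m%:R^-1 * Ep (fun t => X t * X t).
  rewrite /A -Ep_Z ?mulr_ge0 //; congr Ep; apply/funext => t; rewrite /Y; ring.
have -> : B = m%:R^-1 * Ep X by rewrite /B /Y Ep_Z //; apply: X01.
move: (Ep X) (Ep (fun t => X t * X t)) => a b.
by field.
Qed.


Local Notation Sh := (@sharp_est R V Obs Env O e c1 c2 m).
Definition Ind (t : T) : R := (X t == 1)%:R.

Lemma Ind01 t : 0 <= Ind t <= 1.
Proof. by rewrite /Ind; case: (X t == 1); rewrite ?lexx ?ler01. Qed.

Lemma S_eq1 (m0 : (0 < m)%N) ts : (S ts == 1) = [forall j, X (tnth ts j) == 1].
Proof.
have mn0 : m%:R != 0 :> R by rewrite pnatr_eq0 -lt0n.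
apply/idP/forallP.
- move/eqP => h j.
  have hs : \sum_(k < m) X (tnth ts k) = m%:R.
    by move: h; rewrite /smooth_est => /(congr1 (fun x => m%:R * x)); rewrite mulr1 mulVKf.
  have h0 : \sum_(k < m) (1 - X (tnth ts k)) = 0.
    by rewrite sumrB hs sumr_const card_ord subrr.
  have nn : forall k : 'I_m, predT k -> 0 <= 1 - X (tnth ts k).
    by move=> k _; rewrite subr_ge0; case/andP: (X01 (tnth ts k)).
  have h1 := @psumr_eq0P R _ predT (fun k => 1 - X (tnth ts k)) nn h0 j isT.
  by apply/eqP; apply/esym/subr0_eq.
- move=> h; rewrite /smooth_est (eq_bigr (fun _ => 1)); last by move=> j _; apply/eqP.
  by rewrite sumr_const card_ord mulVf.
Qed.

Lemma sharp_prod (m0 : (0 < m)%N) ts : Sh ts = \prod_(j < m) Ind (tnth ts j).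
Proof.
rewrite /sharp_est -/(smooth_est R O e c1 c2 ts) S_eq1 //.
case: forallP => h.
  by rewrite big1 // => j _; rewrite /Ind h.
have [j hj] : exists j, X (tnth ts j) != 1.
  by apply/existsP; rewrite -negb_forall; apply/forallP.
by rewrite (bigD1 j) //= /Ind (negPf hj) mul0r.
Qed.

Lemma Sh01 ts : 0 <= Sh ts <= 1.
Proof. by rewrite /sharp_est; case: ifP; rewrite ?lexx ?ler01. Qed.

Lemma ESh (Hp : is_pmf p) (m0 : (0 < m)%N) : Eiid p Sh = Ep Ind ^+ m.
Proof.
rewrite (_ : Sh = fun ts => \prod_(j < m) (fun _ => Ind) j (tnth ts j)); last first.
  by apply/funext => ts; rewrite sharp_prod.
by rewrite (@Eiid_prod Hp m (fun _ => Ind) (fun _ => Ind01)) prodr_const card_ord.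
Qed.

Lemma VarSh (Hp : is_pmf p) (m0 : (0 < m)%N) :
  Variid p Sh = Ep Ind ^+ m - (Ep Ind ^+ m) ^+ 2.
Proof.
rewrite (@Var_formula Hp m _ Sh01) (ESh Hp m0).
rewrite (_ : (fun ts => Sh ts ^+ 2) = Sh) ?(ESh Hp m0) //.
by apply/funext => ts; rewrite /sharp_est; case: ifP; rewrite ?expr1n ?expr0n.
Qed.

End Smooth.

End Main.
Arguments Ep {R V}.
Arguments Ind {R V Obs Env}.

Lemma alg1 (R : realFieldType) (M mu v Q U : R) :
  0 < M -> 0 < mu -> mu < 1 -> 0 < v -> M * v <= mu - mu ^+ 2 -> 0 < Q -> Q <= U -> U < 1 ->
  M * (mu / U) * ((1 - U) / (1 - mu)) <= (mu ^+ 2 / v) / (Q ^+ 2 / (Q - Q ^+ 2)).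
Proof.
move=> M0 mu0 mu1 v0 Mv Q0 QU U1.
have U0 : 0 < U by apply: lt_le_trans QU.
have mu1' : 0 < 1 - mu by rewrite subr_gt0.
have Q1 : Q - Q ^+ 2 != 0.
  have : 0 < Q - Q ^+ 2 by nra.
  by rewrite lt0r => /andP[].
have v0' : v != 0 by rewrite gt_eqF.
have Q0' : Q != 0 by rewrite gt_eqF.
have U0' : U != 0 by rewrite gt_eqF.
have mu1'' : 1 - mu != 0 by rewrite gt_eqF.
have -> : (mu ^+ 2 / v) / (Q ^+ 2 / (Q - Q ^+ 2)) = (mu ^+ 2 / v) * (Q^-1 - 1).
  by field; rewrite Q0' v0' Q1.
have -> : M * (mu / U) * ((1 - U) / (1 - mu)) = (M * mu / (1 - mu)) * (U^-1 - 1).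
  by field; rewrite U0' mu1''.
apply: ler_pM.
- by rewrite divr_ge0 // ?mulr_ge0 // ltW.
- by rewrite subr_ge0 invf_ge1 // ltW.
- rewrite ler_pdivrMr // mulrAC ler_pdivlMr //; nra.
- by rewrite lerD2r lef_pV2 ?posrE.
Qed.

Lemma alg2 (R : realFieldType) (mu : R) (m : nat) : 0 < mu -> mu < 1 -> (0 < m)%N ->
  (m ^ 2)%:R <= m%:R * mu^-1 ^+ m.-1 * ((1 - mu ^+ m) / (1 - mu)).
Proof.
move=> mu0 mu1 m0.
have mu1' : 1 - mu != 0 by rewrite subr_eq0 eq_sym lt_eqF.
have -> : (1 - mu ^+ m) / (1 - mu) = \sum_(k < m) mu ^+ k.
  apply: (mulIf mu1'); rewrite mulfVK //.
  have := subrX1 mu m; move=> h; rewrite mulrC.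
  by apply: (@oppr_inj R); rewrite opprB h -mulNr opprB.
rewrite natrX expr2 -mulrA ler_wpM2l ?ler0n // mulr_sumr.
apply: le_trans (_ : \sum_(k < m) (1 : R) <= _); first by rewrite sumr_const card_ord.
apply: ler_sum => k _.
have km : (k <= m.-1)%N by rewrite -ltnS prednK.
rewrite -(subnKC km) exprD mulrAC exprVn mulVf ?mul1r ?expf_neq0 ?gt_eqF //.
by rewrite exprn_ege1 // invf_ge1 // ltW.
Qed.

Theorem theorem4p11 (R : realType) (V : finType) (Obs : eqType) (Env : Type)
  (O : Env -> seq V -> seq V -> nat -> Obs) (e : Env)
  (p : seq V -> R) (c1 c2 : seq V) (mu : R) (m : nat) :
  is_pmf p ->
  (forall t, 0 < p t -> (0 < size t)%N) ->
  sim O e c1 c2 p = mu -> 0 < mu < 1 ->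
  (0 < m)%N ->
  Variid p (@smooth_est R V Obs Env O e c1 c2 m) != 0 ->
  Variid p (@sharp_est R V Obs Env O e c1 c2 m) != 0 ->
  let bound := m%:R * (mu^-1) ^+ m.-1 * ((1 - mu ^+ m) / (1 - mu)) in
  bound <= SNR p (@smooth_est R V Obs Env O e c1 c2 m) / SNR p (@sharp_est R V Obs Env O e c1 c2 m)
  /\ (m ^ 2)%:R <= bound.
Proof.
move=> Hp _ Hsim /andP[mu0 mu1] m0 VS0 VSh0 bound.
split; last exact: alg2.
set S := @smooth_est R V Obs Env O e c1 c2 m.
set Sh := @sharp_est R V Obs Env O e c1 c2 m.
have Emu : Ep p (agree_frac R O e c1 c2) = mu := Hsim.
have ES' : Eiid p S = mu by rewrite (@ES R V Obs Env O e c1 c2 p m Hp m0) Emu.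
have VS := @VarS R V Obs Env O e c1 c2 p m Hp m0.
have ESh' := @ESh R V Obs Env O e c1 c2 p m Hp m0.
have VSh := @VarSh R V Obs Env O e c1 c2 p m Hp m0.
have X01' := @X01 R V Obs Env O e c1 c2.
have XX01 t : 0 <= agree_frac R O e c1 c2 t * agree_frac R O e c1 c2 t <= 1.
  by case/andP: (X01' t) => h1 h2; rewrite mulr_ge0 //= mulr_ile1.
have E2le : Ep p (fun t => agree_frac R O e c1 c2 t * agree_frac R O e c1 c2 t) <= mu.
  rewrite -Emu; apply: (@Ep_le R V p Hp _ _ XX01 X01') => t.
  by case/andP: (X01' t) => h1 h2; rewrite -[leRHS]mulr1 ler_wpM2l.
have Ind01' := @Ind01 R V Obs Env O e c1 c2.
have qle : Ep p (Ind O e c1 c2) <= mu.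
  rewrite -Emu; apply: (@Ep_le R V p Hp _ _ Ind01' X01') => t.
  by rewrite /Ind; case: eqP => [->|_] //; case/andP: (X01' t).
have q0 : 0 <= Ep p (Ind O e c1 c2).
  by case: (@Ep_esum R V p Hp _ 1 ler01 Ind01') => _ /andP[].
have S01' := @S01 R V Obs Env O e c1 c2 m m0.
have vge0 : 0 <= Variid p S.
  have B : forall ts, 0 <= (S ts - mu) ^+ 2 <= 1.
    move=> ts; have /andP[h1 h2] : 0 <= S ts <= 1 by exact: S01'.
    rewrite sqr_ge0 /=; move: (S ts) h1 h2 => x h1 h2; clear -h1 h2 mu0 mu1.
    have : 0 <= (1 - x + mu) * (1 + x - mu) by apply: mulr_ge0; lra.
    nra.
  rewrite /Variid ES'.
  by case: (@Ee_fin R V p Hp m _ 1 ler01 B) => _ /andP[].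
have v0 : 0 < Variid p S by rewrite lt_def VS0 vge0.
set q := Ep p (Ind O e c1 c2) in qle q0 ESh' VSh.
have Q0 : 0 < q ^+ m.
  rewrite lt_def exprn_ge0 // andbT; apply: contra VSh0 => /eqP h.
  by rewrite VSh h expr0n subr0.
rewrite /SNR ES' ESh' VSh /bound.
have -> : mu^-1 ^+ m.-1 = mu / mu ^+ m.
  by rewrite -{2}(prednK m0) exprS invfM mulVKf ?gt_eqF // exprVn.
apply: alg1 => //.
- by rewrite ltr0n.
- by rewrite mulrC VS Emu lerD2r.
- by rewrite lerXn2r // nnegrE ltW.
- by rewrite exprn_ilt1 ?ltW // -lt0n.
Qed.
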